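(* Let $\mathbb{F}$ be a finite field. For every $k\in\mathbb{N}$ there exists a CMSO formula $\mathrm{Dep}(X,\langle Y^1\rangle,\dots,\langle Y^k\rangle)$ over $\Sigma_{\mathbb{F}}$ such that for every matrix $A$ over $\mathbb{F}$, every set $S$ of columns of $A$ and all virtual columns $\langle Q^1\rangle,\dots,\langle Q^k\rangle$ of $\mathcal{S}(A)$, the set $S$ is linearly dependent with respect to $v(\langle Q^1\rangle),\dots,v(\langle Q^k\rangle)$ if and only if $\mathcal{S}(A)\models\mathrm{Dep}(S,\langle Q^1\rangle,\dots,\langle Q^k\rangle)$.
   Context: $\Sigma_{\mathbb{F}}$ has unary symbols $R,C$ and binary symbols $\mathrm{Entry}_\alpha$ ($\alpha\in\mathbb{F}$). For a matrix $A$ with rows $r_1,\dots,r_m$, $\mathcal{S}(A)$ has universe rows $\cup$ columns, $R$ = rows, $C$ = columns, $\mathrm{Entry}_\alpha=\{(r,c):A(r,c)=\alpha\}$. CMSO is monadic second-order logic with predicates $\mathrm{mod}_{a,b}(X)$ meaning $|X|\equiv a\pmod b$. A virtual column is a family $\langle Q\rangle=\{Q_\alpha\}_{\alpha\in\mathbb{F}}$ of pairwise disjoint sets of rows covering all rows, with vector $v(\langle Q\rangle)\in\mathbb{F}^m$ whose $i$-th coordinate is $\alpha$ where $r_i\in Q_\alpha$; in formulas it is an $\mathbb{F}$-indexed tuple of set variables. A set $\{u_1,\dots,u_\ell\}$ of columns (vectors of $\mathbb{F}^m$) is dependent with respect to $v_1,\dots,v_k\in\mathbb{F}^m$ if there exist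 $\alpha_1,\dots,\alpha_\ell\in\mathbb{F}$, not all $0$, with $\sum_i\alpha_iu_i\in\mathrm{span}(v_1,\dots,v_k)$. *)

(* Defs.v *)
From HB Require Import structures.
From mathcomp Require Import all_boot all_order all_algebra.
Set Implicit Arguments. Unset Strict Implicit. Unset Printing Implicit Defensive.
Import GRing.Theory.
Local Open Scope ring_scope.

(* First-order variables and set variables are both indexed by nat
   (two separate name spaces). *)
Inductive cmso (F : Type) : Type :=
| CRow   (x : nat)
| CCol   (x : nat)
| CEntry (a : F) (x y : nat)
| CEq    (x y : nat)
| CIn    (x : nat) (X : nat)
| CMod   (a b : nat) (X : nat)
| CTrue
| CNot   (p : cmso F)
| CAnd   (p q : cmso F)
| COr    (p q : cmso F)
| CExV   (x : nat) (p : cmso F)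
| CAllV  (x : nat) (p : cmso F)
| CExS   (X : nat) (p : cmso F)
| CAllS  (X : nat) (p : cmso F).

Record sigma_struct (F : Type) := SigmaStruct {
  carrier : finType;
  s_R : pred carrier;
  s_C : pred carrier;
  s_Entry : F -> rel carrier }.

Definition upd {T : Type} (f : nat -> T) (x : nat) (v : T) : nat -> T :=
  fun y => if y == x then v else f y.

Fixpoint sat (F : Type) (M : sigma_struct F)
  (fo : nat -> carrier M) (so : nat -> {set carrier M}) (p : cmso F) : Prop :=
  match p with
  | CRow x => @s_R F M (fo x)
  | CCol x => @s_C F M (fo x)
  | CEntry a x y => @s_Entry F M a (fo x) (fo y)
  | CEq x y => fo x = fo y
  | CIn x X => fo x \in so X
  | CMod a b X => (#|so X| = a %[mod b])%N
  | CTrue => True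
  | CNot q => ~ sat fo so q
  | CAnd q r => sat fo so q /\ sat fo so r
  | COr q r => sat fo so q \/ sat fo so r
  | CExV x q => exists u : carrier M, sat (upd fo x u) so q
  | CAllV x q => forall u : carrier M, sat (upd fo x u) so q
  | CExS X q => exists U : {set carrier M}, sat fo (upd so X U) q
  | CAllS X q => forall U : {set carrier M}, sat fo (upd so X U) q
  end.

(* universe = rows (inl) + columns (inr) *)
Definition is_row {m n : nat} (u : ('I_m + 'I_n)%type) : bool :=
  if u is inl _ then true else false.
Definition is_col {m n : nat} (u : ('I_m + 'I_n)%type) : bool :=
  if u is inr _ then true else false.
Definition entry_rel (F : eqType) {m n : nat} (A : 'M[F]_(m, n)) (a : F)
  (u w : ('I_m + 'I_n)%type) : bool :=
  match u, w with
  | inl i, inr j => A i j == a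
  | _, _ => false
  end.

Definition SA (F : eqType) (m n : nat) (A : 'M[F]_(m, n)) : sigma_struct F :=
  @SigmaStruct F ('I_m + 'I_n)%type is_row is_col (entry_rel A).

Definition col_set {m n : nat} (S : {set 'I_n}) : {set ('I_m + 'I_n)%type} :=
  [set inr j | j in S].
Definition row_set {m n : nat} (Q : {set 'I_m}) : {set ('I_m + 'I_n)%type} :=
  [set inl i | i in Q].

Definition virtual_column (F : finFieldType) (m : nat) (Q : F -> {set 'I_m}) : Prop :=
  (forall a b : F, a != b -> [disjoint Q a & Q b]) /\
  (forall i : 'I_m, exists a : F, i \in Q a).

Definition vvec (F : finFieldType) (m : nat) (Q : F -> {set 'I_m}) : 'cV[F]_m :=
  \col_i (odflt 0 [pick a : F | i \in Q a]).

Definition dep_wrt (F : fieldType) (m n k : nat) (A : 'M[F]_(m, n))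
  (S : {set 'I_n}) (v : 'I_k -> 'cV[F]_m) : Prop :=
  exists c : 'I_n -> F,
    (exists j, j \in S /\ c j != 0) /\
    exists d : 'I_k -> F,
      \sum_(j in S) c j *: col j A = \sum_(i < k) d i *: v i.

(* Encoding of the free set variables of Dep(X, <Y^1>, ..., <Y^k>):
   X is set variable 0, and Y^i_a is set variable 1 + i*|F| + rank(a). *)
Definition var_X : nat := 0.
Definition var_Y (F : finType) (i : nat) (a : F) : nat :=
  (1 + i * #|F| + enum_rank a)%N.

(* Main.v *)
Require Import Defs.
From HB Require Import structures.
From mathcomp Require Import all_boot all_order all_algebra.
From Stdlib Require Import Classical FunctionalExtensionality.
From mathcomp Require Import zify.
Set Implicit Arguments. Unset Strict Implicit. Unset Printing Implicit Defensive.
Import GRing.Theory.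

Section Comb.
Variable F : Type.
Definition cimp (p q : cmso F) := COr (CNot p) q.
Definition ciff (p q : cmso F) := CAnd (cimp p q) (cimp q p).
Definition cbool (b : bool) : cmso F := if b then CTrue F else CNot (CTrue F).
Definition bigAnd (T : Type) (l : seq T) (f : T -> cmso F) :=
  foldr (fun t acc => CAnd (f t) acc) (CTrue F) l.
Definition bigOr (T : Type) (l : seq T) (f : T -> cmso F) :=
  foldr (fun t acc => COr (f t) acc) (CNot (CTrue F)) l.
Definition exS (l : seq nat) (p : cmso F) := foldr (@CExS F) p l.

Variable M : sigma_struct F.
Implicit Types (fo : nat -> carrier M) (so : nat -> {set carrier M}).

Lemma sat_cimp fo so p q : sat fo so (cimp p q) <-> (sat fo so p -> sat fo so q).
Proof.
rewrite /=; split; first by case=> H Hp //; contradiction.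
by move=> H; case: (classic (sat fo so p)) => Hp; [right; auto | left].
Qed.

Lemma sat_ciff fo so p q : sat fo so (ciff p q) <-> (sat fo so p <-> sat fo so q).
Proof.
rewrite /ciff /=.
have H1 := sat_cimp fo so p q; have H2 := sat_cimp fo so q p; simpl in *; tauto.
Qed.

Lemma sat_cbool fo so b : sat fo so (cbool b) <-> b.
Proof. by case: b => /=; split => //; apply. Qed.

Lemma sat_bigAnd (T : eqType) (l : seq T) f fo so :
  sat fo so (bigAnd l f) <-> forall t, t \in l -> sat fo so (f t).
Proof.
elim: l => [|x l IH] /=; first by split => // _ t; rewrite in_nil.
split.
  case=> H1 /IH H2 t; rewrite in_cons; case/orP=> [/eqP->|]; auto.
move=> H; split; first by apply: H; rewrite in_cons eqxx.
by apply/IH => t Ht; apply: H; rewrite in_cons Ht orbT.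
Qed.

Lemma sat_bigOr (T : eqType) (l : seq T) f fo so :
  sat fo so (bigOr l f) <-> exists t, t \in l /\ sat fo so (f t).
Proof.
elim: l => [|x l IH] /=.
  by split; [move=> H; exfalso; apply: H | case=> t []; rewrite in_nil].
split.
  case=> [H|/IH [t [Ht H]]]; first by exists x; rewrite in_cons eqxx.
  by exists t; rewrite in_cons Ht orbT.
case=> t []; rewrite in_cons; case/orP=> [/eqP-> H|Ht H]; first by left.
by right; apply/IH; exists t.
Qed.

Lemma sat_exS l p fo so :
  sat fo so (exS l p) <->
  exists U : nat -> {set carrier M}, sat fo (fun x => if x \in l then U x else so x) p.
Proof.
elim: l so => [|x l IH] so /=.
  have E U : (fun x => if x \in [::] then U x else so x) = so.
    by apply: functional_extensionality => y; rewrite in_nil.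
  by split; [move=> H; exists so; rewrite E | case=> U; rewrite E].
split.
  case=> U0 /IH [U H]; exists (fun y => if y \in l then U y else U0).
  suff -> : (fun y => if y \in x :: l then (if y \in l then U y else U0) else so y)
       = (fun y => if y \in l then U y else upd so x U0 y) by [].
  apply: functional_extensionality => y; rewrite in_cons /upd.
  by case: (y \in l); case: (y == x).
case=> U H; exists (U x); apply/IH; exists U.
suff -> : (fun y => if y \in l then U y else upd so x (U x) y)
       = (fun y => if y \in x :: l then U y else so y) by [].
apply: functional_extensionality => y; rewrite in_cons /upd.
by case: (y \in l); case: eqP => [->|]; rewrite ?orbT.
Qed.
End Comb.

Section H2sec.
Local Open Scope ring_scope.

Lemma card_F0 (F : finFieldType) : (#|F|%:R : F) = 0.
Proof.
have E : \sum_(x : F) x = \sum_(x : F) (x + 1) := reindex_inj (addIr 1).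
have E1 : \sum_(x : F) (1 : F) = 0.
  by apply: (@addrI _ (\sum_(x : F) x)); rewrite addr0 {2}E big_split.
rewrite -E1 sumr_const. by [].
Qed.

Lemma natr_modF (F : finFieldType) x : (((x %% #|F|)%N)%:R : F) = x%:R.
Proof. by rewrite {2}(divn_eq x #|F|) natrD natrM card_F0 mulr0 add0r. Qed.

Lemma key (F : finFieldType) n (C : F -> {set 'I_n}) (row : 'I_n -> F)
  (disj : forall a b, a != b -> [disjoint C a & C b]) :
  \sum_(ae : F * F) ae.1 * ae.2 * (#|[set j in C ae.1 | row j == ae.2]|)%:R
  = \sum_j odflt 0 [pick a | j \in C a] * row j.
Proof.
under eq_bigr => ae _ do
  rewrite -sum1_card natr_sum mulr_sumr big_mkcond /=.
rewrite exchange_big /=; apply: eq_bigr => j _.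
case: pickP => [a Ha | H0] /=.
  rewrite (bigD1 (a, row j)) //= inE Ha eqxx /= mulr1 big1 ?addr0 // => [[b e]] /=.
  rewrite inE; case Hb: (j \in C b); case He: (row j == e) => //= Hne.
  case: (eqVneq a b) => [Eab|Nab].
    by move/eqP: He Hne => <-; rewrite Eab eqxx.
  by rewrite (disjointFr (disj _ _ Nab) Ha) in Hb.
rewrite mul0r big1 // => [[b e]] _ /=.
by rewrite inE H0.
Qed.

Lemma mem_col_set m n (T : {set 'I_n}) (u : ('I_m + 'I_n)%type) :
  (u \in @col_set m n T) = (if u is inr j then j \in T else false).
Proof.
case: u => [i|j]; rewrite /col_set.
  by apply/imsetP; case=> x _.
by apply/imsetP/idP => [[x Hx [->]] // | Hj]; exists j.
Qed.

Lemma mem_row_set m n (T : {set 'I_m}) (u : ('I_m + 'I_n)%type) :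
  (u \in @row_set m n T) = (if u is inl j then j \in T else false).
Proof.
case: u => [i|j]; rewrite /row_set.
  by apply/imsetP/idP => [[x Hx [->]] // | Hj]; exists i.
by apply/imsetP; case=> x _.
Qed.

Lemma card_col_set m n (T : {set 'I_n}) : #|@col_set m n T| = #|T|.
Proof. by rewrite card_imset // => x y []. Qed.

Lemma disjP (T : finType) (A B : {set T}) :
  (forall x, x \in A -> x \in B -> False) -> [disjoint A & B].
Proof.
move=> H; rewrite disjoint_subset; apply/subsetP => x Ha; rewrite inE.
by apply/negP => Hb; apply: (H x).
Qed.

Lemma inenum (T : finType) (x : T) : x \in enum T.
Proof. by rewrite mem_enum. Qed.

End H2sec.
Arguments cimp : simpl never.
Arguments ciff : simpl never.
Arguments cbool : simpl never.
Arguments bigAnd : simpl never.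
Arguments bigOr : simpl never.
Arguments exS : simpl never.

Section Formula.
Variables (F : finFieldType) (k : nat).

Definition N0 := (1 + k * #|F|)%N.
Definition Cvar (a : F) := (N0 + enum_rank a)%N.
Definition Zvar (ae : F * F) := (N0 + #|F| + enum_rank ae)%N.

Definition cond_sd : cmso F := CAllV 1 (bigAnd (enum F) (fun a =>
   CAnd (cimp (CIn F 1 (Cvar a)) (CIn F 1 var_X))
        (bigAnd (enum F) (fun b =>
           cimp (cbool F (a != b)) (CNot (CAnd (CIn F 1 (Cvar a)) (CIn F 1 (Cvar b)))))))).
Definition cond_nz : cmso F :=
  CExV 1 (bigOr (enum F) (fun a => CAnd (cbool F (a != 0%R)) (CIn F 1 (Cvar a)))).
Definition zdef : cmso F := CAllV 1 (bigAnd (enum {: F * F}) (fun ae =>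
   ciff (CIn F 1 (Zvar ae)) (CAnd (CIn F 1 (Cvar ae.1)) (CEntry ae.2 0 1)))).
Definition count_f (d : {ffun 'I_k -> F}) : cmso F :=
  bigOr (enum {ffun F * F -> 'I_#|F|}) (fun t =>
    CAnd (bigAnd (enum {: F * F}) (fun ae => CMod F (t ae) #|F| (Zvar ae)))
         (bigOr (enum {ffun 'I_k -> F}) (fun w =>
            CAnd (cbool F (\sum_(ae : F * F) ae.1 * ae.2 * (t ae : nat)%:R
                          == \sum_(i < k) d i * w i)%R)
                 (bigAnd (enum 'I_k) (fun i => CIn F 0 (var_Y i (w i))))))).
Definition row_f d : cmso F :=
  CAllV 0 (cimp (CRow F 0) (exS (map Zvar (enum {: F * F})) (CAnd zdef (count_f d)))).
Definition Dep : cmso F := bigOr (enum {ffun 'I_k -> F}) (fun d =>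
  exS (map Cvar (enum F)) (CAnd cond_sd (CAnd cond_nz (row_f d)))).

Lemma notin_map_gt (T : eqType) (x : nat) (f : T -> nat) s :
  (forall t, (x < f t)%N) -> x \notin map f s.
Proof. by move=> H; apply/mapP => [[t _ E]]; move: (H t); rewrite -E ltnn. Qed.

Lemma X_notC : var_X \notin map Cvar (enum F).
Proof. by apply: notin_map_gt. Qed.
Lemma X_notZ : var_X \notin map Zvar (enum {: F * F}).
Proof. by apply: notin_map_gt => t; rewrite /Zvar /N0. Qed.
Lemma Y_lt (i : 'I_k) (b : F) : (var_Y i b < N0)%N.
Proof.
rewrite /var_Y /N0 -addnA ltn_add2l.
apply: (@leq_trans (i * #|F| + #|F|)%N); first by rewrite ltn_add2l; exact: ltn_ord.
by rewrite -mulSnr leq_mul2r ltn_ord orbT.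
Qed.
Lemma Y_notC (i : 'I_k) (b : F) : var_Y i b \notin map Cvar (enum F).
Proof. by apply: notin_map_gt => t; apply: leq_trans (Y_lt i b) _; rewrite leq_addr. Qed.
Lemma Y_notZ (i : 'I_k) (b : F) : var_Y i b \notin map Zvar (enum {: F * F}).
Proof. by apply: notin_map_gt => t; apply: leq_trans (Y_lt i b) _; rewrite /Zvar -addnA leq_addr. Qed.
Lemma C_notZ a : Cvar a \notin map Zvar (enum {: F * F}).
Proof. apply: notin_map_gt => t; rewrite /Cvar /Zvar -addnA ltn_add2l.
by apply: leq_trans (ltn_ord (enum_rank a)) (leq_addr _ _). Qed.
Lemma C_inC a : Cvar a \in map Cvar (enum F).
Proof. by apply: map_f; rewrite mem_enum. Qed.
Lemma Z_inZ ae : Zvar ae \in map Zvar (enum {: F * F}).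
Proof. by apply: map_f; rewrite mem_enum. Qed.
Lemma Cvar_inj : injective Cvar.
Proof. by move=> a b /addnI /val_inj /enum_rank_inj. Qed.
Lemma Zvar_inj : injective Zvar.
Proof. by move=> a b /addnI /val_inj /enum_rank_inj. Qed.

End Formula.

Opaque cimp ciff cbool bigAnd bigOr exS.

Theorem lemma9 (F : finFieldType) (k : nat) :
  exists Dep : cmso F,
    forall (m n : nat) (A : 'M[F]_(m, n)) (S : {set 'I_n})
           (Q : 'I_k -> F -> {set 'I_m}),
      (forall i, virtual_column (Q i)) ->
      forall (fo : nat -> carrier (SA A))
             (so : nat -> {set carrier (SA A)}),
        so var_X = col_set S ->
        (forall (i : 'I_k) (a : F), so (var_Y i a) = row_set (Q i a)) ->
        (dep_wrt A S (fun i => vvec (Q i)) <-> sat fo so Dep).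
Proof.
exists (Dep F k) => m n A S Q HQ fo so HX HY.
have vvec_eq i r a : r \in Q i a -> vvec (Q i) r 0%R = a.
  move=> Ha; rewrite /vvec mxE; case: pickP => [b Hb|H] /=.
    case: (eqVneq b a) => // Nba; have [Hd _] := HQ i.
    by rewrite (disjointFr (Hd _ _ Nba) Hb) in Ha.
  by rewrite H in Ha.
rewrite /Dep sat_bigOr; split.
- case=> c [[j0 [Hj0 Hc0]] [d Hd]].
  exists [ffun i => d i]; split; first by rewrite mem_enum.
  pose C' := fun a : F => [set j in S | c j == a].
  pose U := fun x => if [pick a : F | Cvar k a == x] is Some a
                     then (@col_set m n (C' a) : {set carrier (SA A)}) else set0.
  have UC a : U (Cvar k a) = col_set (C' a).
    rewrite /U; case: pickP => [b /eqP /Cvar_inj -> // | H].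
    by have := H a; rewrite eqxx.
  apply/sat_exS; exists U.
  set so1 := fun x => _.
  have so1X : so1 var_X = col_set S by rewrite /so1 (negbTE (X_notC F k)) HX.
  have so1Y (i : 'I_k) (b : F) : so1 (var_Y i b) = row_set (Q i b).
    by rewrite /so1 (negbTE (Y_notC i b)) HY.
  have so1C a : so1 (Cvar k a) = col_set (C' a) by rewrite /so1 C_inC UC.
  split; [|split].
  + rewrite /cond_sd /= => u; apply/sat_bigAnd => a _ /=; split.
      apply/sat_cimp => /=; rewrite /upd /= so1C so1X !mem_col_set.
      by case: u => // j; rewrite inE => /andP [].
    apply/sat_bigAnd => b _; apply/sat_cimp => /sat_cbool Nab /=.
    rewrite /upd /= !so1C !mem_col_set; case: u => [i [] //|j].
    rewrite !inE => [[/andP [_ /eqP Ha] /andP [_ /eqP Hb]]].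
    by rewrite -Ha -Hb eqxx in Nab.
  + rewrite /cond_nz /=; exists (inr j0); apply/sat_bigOr; exists (c j0).
    split; first by rewrite mem_enum.
    split; first by apply/sat_cbool.
    by rewrite /= /upd /= so1C mem_col_set inE Hj0 eqxx.
  + rewrite /row_f /= => u; apply/sat_cimp => /=; rewrite /upd /=.
    case: u => [r|j] // _.
    pose Z' := fun ae : F * F => [set j in C' ae.1 | A r j == ae.2].
    pose V := fun x => if [pick ae : F * F | Zvar k ae == x] is Some ae
                     then (@col_set m n (Z' ae) : {set carrier (SA A)}) else set0.
    have VZ ae : V (Zvar k ae) = col_set (Z' ae).
      rewrite /V; case: pickP => [b /eqP /Zvar_inj -> // | H].
      by have := H ae; rewrite eqxx.
    apply/sat_exS; exists V.
    set so2 := fun x => if x \in _ then V x else _.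
    have so2Z ae : so2 (Zvar k ae) = col_set (Z' ae) by rewrite /so2 Z_inZ VZ.
    have so2C (a : F) : so2 (Cvar k a) = col_set (C' a).
      by rewrite /so2 (negbTE (C_notZ _ _)) so1C.
    have so2Y (i : 'I_k) (b : F) : so2 (var_Y i b) = row_set (Q i b).
      by rewrite /so2 (negbTE (Y_notZ _ _)) so1Y.
    split.
    * rewrite /zdef /= => y; apply/sat_bigAnd => ae _; apply/sat_ciff => /=.
      rewrite /upd /= so2Z so2C !mem_col_set; case: y => [i|j] /=.
        by split => // [[]].
      by rewrite inE; split => [/andP|[-> ->]].
    * rewrite /count_f; apply/sat_bigOr.
      have Fpos : (0 < #|F|)%N by apply/card_gt0P; exists 0%R.
      exists [ffun ae => Ordinal (ltn_pmod #|Z' ae| Fpos)].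
      split; first by rewrite mem_enum.
      split.
      - apply/sat_bigAnd => ae _ /=; rewrite so2Z card_col_set ffunE /=.
        by rewrite modn_mod.
      - apply/sat_bigOr; exists [ffun i => vvec (Q i) r 0%R].
        split; first by rewrite mem_enum.
        split.
        + apply/sat_cbool; apply/eqP.
          under eq_bigr => ae _ do rewrite ffunE /= natr_modF.
          rewrite key; last first.
            move=> a b Nab; apply: disjP => j; rewrite !inE.
            move=> /andP[_ /eqP Ha] /andP[_ /eqP Hb].
            by rewrite -Ha -Hb eqxx in Nab.
          have Hr : (\sum_(j in S) c j * A r j = \sum_i d i * vvec (Q i) r 0)%R.
            have := congr1 (fun M : 'cV[F]_m => M r 0%R) Hd; rewrite /= !summxE => E.
            rewrite (eq_bigr (fun j => ((c j *: col j A) r 0)%R)) ?E; last first.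
              by move=> j _; rewrite !mxE.
            by apply: eq_bigr => i _; rewrite !mxE.
          transitivity (\sum_(j in S) c j * A r j)%R.
            rewrite [RHS]big_mkcond; apply: eq_bigr => j _.
            case: pickP => [a|H] /=.
              by rewrite inE => /andP [-> /eqP ->].
            case HjS: (j \in S); last by rewrite GRing.mul0r.
            by have := H (c j); rewrite inE HjS eqxx.
          by rewrite Hr; apply: eq_bigr => i _; rewrite !ffunE.
        + apply/sat_bigAnd => i _ /=; rewrite /upd /= so2Y mem_row_set ffunE.
          have [a Ha] := (HQ i).2 r.
          by rewrite (vvec_eq _ _ _ Ha).
- case=> d [_ /sat_exS [U H0]].
  set so1 := fun x => if x \in _ then U x else _ in H0.
  have so1X : so1 var_X = col_set S by rewrite /so1 (negbTE (X_notC F k)) HX.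
  have so1Y (i : 'I_k) (b : F) : so1 (var_Y i b) = row_set (Q i b).
    by rewrite /so1 (negbTE (Y_notC i b)) HY.
  have [Hsd [Hnz Hrow]] : sat fo so1 (cond_sd F k) /\ sat fo so1 (cond_nz F k)
     /\ sat fo so1 (row_f d) := H0.
  have {}Hsd : forall u, sat (upd fo 1 u) so1 (bigAnd (enum F) (fun a =>
   CAnd (cimp (CIn F 1 (Cvar k a)) (CIn F 1 var_X))
        (bigAnd (enum F) (fun b =>
           cimp (cbool F (a != b)) (CNot (CAnd (CIn F 1 (Cvar k a)) (CIn F 1 (Cvar k b)))))))) := Hsd.
  pose C' := fun a : F => [set j | @inr 'I_m 'I_n j \in so1 (Cvar k a)].
  have Hsub' (a : F) u : u \in so1 (Cvar k a) -> u \in @col_set m n S.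
    move: (Hsd u) => /sat_bigAnd /(_ a (inenum a)) /= [/sat_cimp /= H1 _].
    by move: H1; rewrite /upd /= so1X.
  have Hsub (a : F) j : j \in C' a -> j \in S.
    by rewrite inE => /Hsub'; rewrite mem_col_set.
  have Hdisj (a b : F) : a != b -> [disjoint C' a & C' b].
    move=> Nab; apply: disjP => j; rewrite !inE => Ha Hb.
    move: (Hsd (inr j)) => /sat_bigAnd /(_ a (inenum a)) /=.
    case=> _ /sat_bigAnd /(_ b (inenum b)) /sat_cimp H2.
    have /= := H2 (proj2 (sat_cbool _ _ _) Nab).
    by rewrite /upd /=; apply.
  pose c := fun j => odflt 0%R [pick a | j \in C' a].
  have cE (a : F) j : j \in C' a -> c j = a.
    rewrite /c; case: pickP => [b Hb|H] /= Ha.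
      case: (eqVneq b a) => // Nba.
      by rewrite (disjointFr (Hdisj _ _ Nba) Hb) in Ha.
    by rewrite H in Ha.
  exists c; split.
    move: Hnz; rewrite /cond_nz /= => [[u /sat_bigOr [a [_ [/sat_cbool Ha /=]]]]].
    rewrite /upd /= => Hu; have := Hsub' a _ Hu; rewrite mem_col_set.
    case: u Hu => // j Hu HjS; exists j; split => //.
    by rewrite (cE a) // inE.
  exists (fun i => d i); apply/matrixP => r z; rewrite (ord1 z) !summxE.
  rewrite (eq_bigr (fun j => c j * A r j)%R); last by move=> j _; rewrite !mxE.
  rewrite [RHS](eq_bigr (fun i => d i * vvec (Q i) r 0)%R); last first.
    by move=> i _; rewrite !mxE.
  move: Hrow; rewrite /row_f /= => /(_ (inl r)) /sat_cimp /= /(_ isT) /sat_exS [V].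
  set so2 := fun x => if x \in _ then V x else _.
  case=> Hz Hcount.
  have so2C (a : F) : so2 (Cvar k a) = so1 (Cvar k a).
    by rewrite /so2 (negbTE (C_notZ _ _)).
  have so2Y (i : 'I_k) (b : F) : so2 (var_Y i b) = row_set (Q i b).
    by rewrite /so2 (negbTE (Y_notZ _ _)) so1Y.
  have Zc (ae : F * F) : #|so2 (Zvar k ae)| = #|[set j in C' ae.1 | A r j == ae.2]|.
    suff -> : so2 (Zvar k ae) = @col_set m n [set j in C' ae.1 | A r j == ae.2] by rewrite card_col_set.
    apply/setP => y.
    move: Hz; rewrite /zdef /= => /(_ y) /sat_bigAnd /(_ ae (inenum ae)).
    move/sat_ciff => /=; rewrite /upd /= so2C mem_col_set.
    case: y => [i|j] /= Hy.
      by apply/idP => /Hy [_].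
    by rewrite !inE; apply/idP/andP => [/Hy [H1 H2]|[H1 H2]]; [split|apply/Hy; split].
  move: Hcount; rewrite /count_f => /sat_bigOr [t [_ [/sat_bigAnd Hmod]]].
  move=> /sat_bigOr [w [_ [/sat_cbool /eqP Hsum /sat_bigAnd Hw]]].
  have tE (ae : F * F) : (t ae : nat) = (#|[set j in C' ae.1 | A r j == ae.2]| %% #|F|)%N.
    have := Hmod ae (inenum _); rewrite /= Zc => ->.
    by rewrite modn_small.
  have wE (i : 'I_k) : vvec (Q i) r 0%R = w i.
    have := Hw i (inenum _); rewrite /= /upd /= so2Y mem_row_set.
    exact: vvec_eq.
  rewrite [RHS](eq_bigr (fun i => d i * w i)%R); last by move=> i _; rewrite wE.
  rewrite -Hsum.
  under [RHS]eq_bigr => ae _ do rewrite tE natr_modF.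
  rewrite key //.
  rewrite big_mkcond; apply: eq_bigr => j _; case: ifP => // HjS.
  rewrite /c; case: pickP => [a Ha|] /=.
    by rewrite (Hsub a j Ha) in HjS.
  by rewrite GRing.mul0r.
Qed.
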